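(* Let $G=(X,b,m,c)$ be a weighted graph with $c\ge0$ and let $p\in[1,\infty)$. (a) For every $\varepsilon>0$ there is a strictly positive function $f_\varepsilon\colon X\to(0,\infty)$ such that every $g\colon X\to\mathbb{R}$ with $g(x)\in(-f_\varepsilon(x),f_\varepsilon(x))$ for all $x\in X$ satisfies $\mathcal{E}_p(g)<\varepsilon$. (b) For every $\varepsilon>0$ and every $u\in D^p$ there is $u_\varepsilon\in D^p$ such that $u_\varepsilon(x)\ne u_\varepsilon(y)$ for all $x\ne y$, $\sup_X|u-u_\varepsilon|<\varepsilon$, and $\mathcal{E}_p(u-u_\varepsilon)<\varepsilon$.
   Context: Weighted graph $G=(X,b,m,c)$: $X$ countably infinite; $b$ symmetric, nonnegative, zero on the diagonal, $\sum_yb(x,y)<\infty$; $m>0$; $c\colon X\to[0,\infty)$; $x\sim y$ iff $b(x,y)>0$; $X$ connected. $\mathcal{E}_p(f)=\frac12\sum_{x,y}b(x,y)|f(x)-f(y)|^p+\sum_xc(x)|f(x)|^p$ and $D^p=\{f:\mathcal{E}_p(f)<\infty\}$. *)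

(* Defs.v *)
From HB Require Import structures.
From mathcomp Require Import all_boot all_order all_algebra.
From mathcomp Require Import all_classical all_reals all_analysis.
From Stdlib Require Import Relation_Operators.
Set Implicit Arguments. Unset Strict Implicit. Unset Printing Implicit Defensive.
Import Order.TTheory GRing.Theory Num.Theory.
Local Open Scope classical_set_scope.
Local Open Scope ring_scope.

Section WG.
Context {R : realType} {X : choiceType}.

Definition adj (b : X -> X -> R) (x y : X) : Prop := 0 < b x y.

Definition weighted_graph (b : X -> X -> R) (m : X -> R) (c : X -> R) : Prop :=
  ([set: X] #= [set: nat])%card /\
  (forall x y, b x y = b y x) /\
  (forall x y, 0 <= b x y) /\
  (forall x, b x x = 0) /\
  (forall x, (\esum_(y in [set: X]) (b x y)%:E < +oo)%E) /\
  (forall x, 0 < m x) /\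
  (forall x, 0 <= c x) /\
  (forall x y, clos_refl_trans X (adj b) x y).

Definition energy (b : X -> X -> R) (c : X -> R) (p : R) (f : X -> R) : \bar R :=
  ((2^-1)%:E * \esum_(xy in [set: X * X])
                 (b xy.1 xy.2 * (`|f xy.1 - f xy.2| `^ p))%:E
   + \esum_(x in [set: X]) (c x * (`|f x| `^ p))%:E)%E.

Definition Dp (b : X -> X -> R) (c : X -> R) (p : R) (f : X -> R) : Prop :=
  (energy b c p f < +oo)%E.

Definition sup_dist (u v : X -> R) : \bar R :=
  ereal_sup [set (`|u x - v x|)%:E | x in [set: X]].

End WG.

(* Main.v *)
Require Import Defs.
From HB Require Import structures.
From mathcomp Require Import all_boot all_order all_algebra.
From mathcomp Require Import all_classical all_reals all_analysis.
From mathcomp Require Import lra.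
Import Order.TTheory GRing.Theory Num.Theory.
Local Open Scope classical_set_scope.
Local Open Scope ring_scope.

Section Helpers.
Context {R : realType}.

Lemma pow2le (p a b : R) : 0 <= p ->
  `|a + b| `^ p <= 2 `^ p * (`|a| `^ p + `|b| `^ p).
Proof.
move=> p0.
wlog hab : a b / `|a| <= `|b|.
  move=> W; have [h|h] := leP `|a| `|b|; first exact: W.
  by rewrite addrC [`|a| `^ p + _]addrC; apply: W; exact: ltW.
have h1 : `|a + b| <= 2 * `|b|.
  by rewrite (le_trans (ler_normD _ _))// mulr2n mulrDl mul1r lerD.
apply: (le_trans (ge0_ler_powR p0 _ _ h1)); rewrite ?nnegrE ?mulr_ge0//.
rewrite powRM// ler_wpM2l ?powR_ge0// lerDr powR_ge0//.
Qed.

Lemma esum_scale_le (T : choiceType) (S : set T) (k : R) (a : T -> \bar R) :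
  0 <= k -> (forall x, (0 <= a x)%E) ->
  (\esum_(x in S) (k%:E * a x) <= k%:E * \esum_(x in S) a x)%E.
Proof.
move=> k0 a0; apply: ge_ereal_sup => _ [A [finA AS] <-].
rewrite fsbig_finite//= -ge0_sume_distrr; last by move=> x _; apply: a0.
apply: lee_wpmul2l; first by rewrite lee_fin.
by apply: ereal_sup_ubound; exists A => //; rewrite fsbig_finite.
Qed.

Lemma esum_sub_le (T : choiceType) (A B : set T) (a : T -> \bar R) :
  A `<=` B -> (\esum_(x in A) a x <= \esum_(x in B) a x)%E.
Proof.
move=> AB; apply: ge_ereal_sup => _ [F [finF FA] <-].
by apply: ereal_sup_ubound; exists F => //; split => // x /FA /AB.
Qed.

End Helpers.
Lemma X_enum (X : choiceType) : ([set: X] #= [set: nat])%card ->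
  exists (i : X -> nat) (e : nat -> X), forall x, e (i x) = x.
Proof.
case/pcard_eqP => f.
have hs : forall n : nat, exists x : X, f x = n.
  move=> n; have : [set: nat] n by [].
  by move/(surj (f := f)) => [x _ <-]; exists x.
have [e he] := boolp.choice hs.
exists f, e => x; apply: (inj (f := f)); rewrite ?inE//; exact: he.
Qed.

Lemma part_a (R : realType) (X : choiceType)
  (b : X -> X -> R) (m : X -> R) (c : X -> R) (p : R) :
  weighted_graph b m c -> 1 <= p ->
  (forall eps : R, 0 < eps ->
     exists f : X -> R, (forall x, 0 < f x) /\
       forall g : X -> R, (forall x, - f x < g x < f x) ->
         (energy b c p g < eps%:E)%E).
Proof.
move=> [hcard [bsym [b0 [bdiag [bdeg [_ [c0 _]]]]]]] p1 eps eps0.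
have p0 : 0 <= p by apply: le_trans p1.
have pn0 : p != 0 by rewrite gt_eqF// (lt_le_trans ltr01 p1).
have [i [e ie]] := X_enum _ hcard.
have iinj : injective i := can_inj ie.
pose deg x := fine (\esum_(y in [set: X]) (b x y)%:E).
have degE x : \esum_(y in [set: X]) (b x y)%:E = (deg x)%:E.
  by rewrite fineK// ge0_fin_numE// esum_ge0// => y _; rewrite lee_fin.
have deg0 x : 0 <= deg x.
  by rewrite -lee_fin -degE esum_ge0// => y _; rewrite lee_fin.
pose w x := (eps / 2) / (2 ^ (i x).+1)%:R.
have w0 x : 0 < w x by rewrite divr_gt0 ?divr_gt0// ltr0n expn_gt0.
pose K x := 1 + 2 `^ p * deg x + c x.
have K1 x : 1 <= K x.
  by rewrite /K -addrA lerDl addr_ge0 ?mulr_ge0 ?powR_ge0.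
have K0 x : 0 < K x by apply: lt_le_trans (K1 x).
pose F x := w x / K x.
have F0 x : 0 < F x by rewrite divr_gt0.
pose f x := F x `^ p^-1.
have f0 x : 0 < f x by rewrite powR_gt0.
have fp x : f x `^ p = F x.
  by rewrite /f -powRrM mulVf// powRr1// ltW.
have FK x : F x * (2 `^ p * deg x + c x) <= w x.
  rewrite -[leRHS](@divfK _ (K x)) ?gt_eqF// ler_wpM2l ?ltW//.
  by rewrite /K -addrA -subr_gt0 addrK ltr01.
have sum_w : (\esum_(x in [set: X]) (w x)%:E <= (eps / 2)%:E)%E.
  pose a n := ((eps / 2) / (2 ^ n.+1)%:R)%:E.
  have -> : \esum_(x in [set: X]) (w x)%:E = \esum_(x in [set: X]) a (i x) by [].
  rewrite -(esum_image [set: X] i a); last by move=> x y _ _; exact: iinj.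
  apply: le_trans; first exact: (@esum_sub_le R _ _ _ a (subsetT _)).
  rewrite -nneseries_esumT; last by move=> n; rewrite /a lee_fin !divr_ge0// ltW.
  by apply: epsilon_trick0; rewrite divr_ge0// ltW.
have Fge0 x : 0 <= F x := ltW (F0 x).
clearbody f F K w deg.
exists f; split => // g hg.
have gF x : `|g x| `^ p <= F x.
  rewrite -fp; apply: ge0_ler_powR => //; rewrite ?nnegrE//.
  - exact: ltW.
  - by rewrite ltW// ltr_norml hg.
have pt x y : b x y * `|g x - g y| `^ p <=
    2 `^ p * b x y * F x + 2 `^ p * b x y * F y.
  have := ler_wpM2l (b0 x y) (pow2le p (g x) (- g y) p0); rewrite normrN => H.
  apply: (le_trans H); rewrite mulrCA mulrA mulrDr.
  by rewrite lerD// ler_wpM2l ?mulr_ge0 ?powR_ge0.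
pose T1 := \esum_(x in [set: X]) ((2 `^ p * F x * deg x)%:E).
pose T2 := \esum_(x in [set: X]) ((c x * F x)%:E).
have T1ge0 : (0 <= T1)%E.
  by apply: esum_ge0 => x _; rewrite lee_fin !mulr_ge0 ?powR_ge0 ?deg0 ?Fge0.
have T2ge0 : (0 <= T2)%E.
  by apply: esum_ge0 => x _; rewrite lee_fin !mulr_ge0 ?c0 ?Fge0.
have T12 : (T1 + T2 <= (eps / 2)%:E)%E.
  rewrite /T1 /T2 -esumD; last 2 first.
  - by move=> x _; rewrite lee_fin !mulr_ge0 ?powR_ge0 ?deg0 ?Fge0.
  - by move=> x _; rewrite lee_fin !mulr_ge0 ?c0 ?Fge0.
  apply: le_trans sum_w; apply: le_esum => x _; rewrite -EFinD lee_fin.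
  by apply: le_trans (FK x); rewrite mulrDr mulrCA mulrA [c x * _]mulrC.
have T1fin : T1 \is a fin_num.
  rewrite ge0_fin_numE//; apply: (le_lt_trans _ (ltry (eps / 2))).
  by apply: le_trans T12; rewrite leeDl.
have T2fin : T2 \is a fin_num.
  rewrite ge0_fin_numE//; apply: (le_lt_trans _ (ltry (eps / 2))).
  by apply: le_trans T12; rewrite leeDr.
have setXT : [set: X * X] = [set: X] `*`` (fun _ => [set: X]).
  by apply/seteqP; split.
have half1 : (\esum_(xy in [set: X * X])
    ((2 `^ p * b xy.1 xy.2 * F xy.1)%:E) <= T1)%E.
  rewrite setXT -(esum_esum (a := fun x y => (2 `^ p * b x y * F x)%:E));
    last by move=> x y _ _; rewrite lee_fin !mulr_ge0 ?powR_ge0.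
  apply: le_esum => x _.
  rewrite (eq_esum (b := fun y => ((2 `^ p * F x)%:E * (b x y)%:E)%E));
    last by move=> y _; rewrite -EFinM mulrAC.
  apply: le_trans; first apply: esum_scale_le.
  - by rewrite mulr_ge0 ?powR_ge0.
  - by move=> y; rewrite lee_fin.
  by rewrite degE -EFinM.
have half2 : (\esum_(xy in [set: X * X])
    ((2 `^ p * b xy.1 xy.2 * F xy.2)%:E) = \esum_(xy in [set: X * X])
    ((2 `^ p * b xy.1 xy.2 * F xy.1)%:E))%E.
  rewrite (reindex_esum [set: X * X] [set: X * X] (fun xy => (xy.2, xy.1))).
    by apply: eq_esum => -[x y] _ /=; rewrite bsym.
  split.
  - by [].
  - by move=> [x1 y1] [x2 y2] _ _ [-> ->].
  - by move=> [x y] _; exists (y, x).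
have E1 : (\esum_(xy in [set: X * X])
    ((b xy.1 xy.2 * `|g xy.1 - g xy.2| `^ p)%:E) <= T1 + T1)%E.
  apply: le_trans; first apply: (le_esum (b := fun xy =>
    ((2 `^ p * b xy.1 xy.2 * F xy.1)%:E + (2 `^ p * b xy.1 xy.2 * F xy.2)%:E)%E)).
    by move=> xy _; rewrite -EFinD lee_fin; exact: pt.
  rewrite esumD ?half2; first exact: (leeD half1 half1).
  - by move=> xy _; rewrite lee_fin !mulr_ge0 ?powR_ge0.
  - by move=> xy _; rewrite lee_fin !mulr_ge0 ?powR_ge0.
have E2 : (\esum_(x in [set: X]) ((c x * `|g x| `^ p)%:E) <= T2)%E.
  by apply: le_esum => x _; rewrite lee_fin ler_wpM2l.
have H : (energy b c p g <= (2^-1)%:E * (T1 + T1 + T2))%E.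
  rewrite /energy; apply: lee_wpmul2l; first by rewrite lee_fin invr_ge0 ler0n.
  exact: leeD E1 E2.
apply: le_lt_trans H _.
move: T12; rewrite -(fineK T1fin) -(fineK T2fin) -!EFinD -EFinM !lte_fin lee_fin.
have := fine_ge0 T1ge0; have := fine_ge0 T2ge0.
move: (fine T1) (fine T2) => t1 t2 ? ? h.
lra.
Qed.

Section PartB.
Context {R : realType} {X : choiceType}.
Variables (b : X -> X -> R) (c : X -> R) (p : R).
Hypothesis b0 : forall x y, 0 <= b x y.
Hypothesis c0 : forall x, 0 <= c x.
Hypothesis p0 : 0 <= p.

Let E1 (h : X -> R) := \esum_(xy in [set: X * X])
  (b xy.1 xy.2 * `|h xy.1 - h xy.2| `^ p)%:E.
Let E2 (h : X -> R) := \esum_(x in [set: X]) (c x * `|h x| `^ p)%:E.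

Let E1ge0 h : (0 <= E1 h)%E.
Proof. by apply: esum_ge0 => xy _; rewrite lee_fin mulr_ge0 ?powR_ge0. Qed.
Let E2ge0 h : (0 <= E2 h)%E.
Proof. by apply: esum_ge0 => xy _; rewrite lee_fin mulr_ge0 ?powR_ge0. Qed.

Let energyE h : energy b c p h = ((2^-1)%:E * (E1 h + E2 h))%E.
Proof. by []. Qed.

Lemma energy_split h :
  (energy b c p h < +oo)%E <-> (E1 h < +oo)%E /\ (E2 h < +oo)%E.
Proof.
rewrite energyE; split.
- move=> H.
  have S : (E1 h + E2 h < +oo)%E.
    move: H; have : (0 <= E1 h + E2 h)%E by rewrite adde_ge0.
    case: (E1 h + E2 h) => [r _ _|_|//].
      exact: ltry.
    by rewrite mulry sgrV gtr0_sg ?invr_gt0// mul1e.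
  split; apply: le_lt_trans S; [exact: leeDl|exact: leeDr].
- move=> [h1 h2]; apply: lte_mul_pinfty.
  + by rewrite lee_fin invr_ge0.
  + by [].
  + exact: lte_add_pinfty.
Qed.

Lemma E1_add (u g : X -> R) :
  (E1 (fun x => (u x + g x)%R) <= (2 `^ p)%:E * E1 u + (2 `^ p)%:E * E1 g)%E.
Proof.
apply: le_trans; last first.
  apply: leeD; apply: esum_scale_le; rewrite ?powR_ge0// => xy;
  by rewrite lee_fin mulr_ge0 ?powR_ge0.
rewrite -esumD; last 2 first.
- by move=> xy _; rewrite -EFinM lee_fin !mulr_ge0 ?powR_ge0.
- by move=> xy _; rewrite -EFinM lee_fin !mulr_ge0 ?powR_ge0.
apply: le_esum => xy _; rewrite -!EFinM -EFinD lee_fin.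
rewrite (_ : u xy.1 + g xy.1 - (u xy.2 + g xy.2) =
  (u xy.1 - u xy.2) + (g xy.1 - g xy.2)); last by rewrite opprD addrACA.
apply: le_trans; first exact: (ler_wpM2l (b0 _ _) (pow2le _ _ _ p0)).
by rewrite -!mulrDr mulrCA.
Qed.

Lemma E2_add (u g : X -> R) :
  (E2 (fun x => (u x + g x)%R) <= (2 `^ p)%:E * E2 u + (2 `^ p)%:E * E2 g)%E.
Proof.
apply: le_trans; last first.
  apply: leeD; apply: esum_scale_le; rewrite ?powR_ge0// => xy;
  by rewrite lee_fin mulr_ge0 ?powR_ge0.
rewrite -esumD; last 2 first.
- by move=> xy _; rewrite -EFinM lee_fin !mulr_ge0 ?powR_ge0.
- by move=> xy _; rewrite -EFinM lee_fin !mulr_ge0 ?powR_ge0.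
apply: le_esum => x _; rewrite -!EFinM -EFinD lee_fin.
apply: le_trans; first exact: (ler_wpM2l (c0 _) (pow2le _ _ _ p0)).
by rewrite -!mulrDr mulrCA.
Qed.

Lemma Dp_add u g : Dp b c p u -> Dp b c p g -> Dp b c p (fun x => u x + g x).
Proof.
rewrite /Dp !energy_split => -[u1 u2] [g1 g2]; split.
- apply: le_lt_trans (E1_add u g) _; apply: lte_add_pinfty;
  by apply: lte_mul_pinfty; rewrite ?lee_fin ?powR_ge0.
- apply: le_lt_trans (E2_add u g) _; apply: lte_add_pinfty;
  by apply: lte_mul_pinfty; rewrite ?lee_fin ?powR_ge0.
Qed.

End PartB.

Theorem lemma3p13 (R : realType) (X : choiceType)
  (b : X -> X -> R) (m : X -> R) (c : X -> R) (p : R) :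
  weighted_graph b m c -> 1 <= p ->
  (forall eps : R, 0 < eps ->
     exists f : X -> R, (forall x, 0 < f x) /\
       forall g : X -> R, (forall x, - f x < g x < f x) ->
         (energy b c p g < eps%:E)%E)
  /\
  (forall (eps : R) (u : X -> R), 0 < eps -> Dp b c p u ->
     exists ue : X -> R,
       [/\ Dp b c p ue,
           (forall x y, x <> y -> ue x <> ue y),
           (sup_dist u ue < eps%:E)%E
         & (energy b c p (fun x => (u x - ue x)%R) < eps%:E)%E]).
Proof.
move=> wg p1; have PA := @part_a R X b m c p wg p1; split => // eps u eps0 Du.
have [hcard [bsym [b0 [bdiag [bdeg [_ [c0 _]]]]]]] := wg.
have p0 : 0 <= p by apply: le_trans p1.
have [f [f0 hf]] := PA eps eps0.
have [i [e ie]] := X_enum _ hcard.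
have iinj : injective i := can_inj ie.
pose h x := Num.min (f x) (eps / 2).
have h0 x : 0 < h x by rewrite lt_min f0 divr_gt0.
have hf' x : h x <= f x by rewrite ge_min lexx.
have he x : h x <= eps / 2 by rewrite ge_min lexx orbT.
pose mm := fix mm n := if n is k.+1 then Num.min (mm k) (h (e k.+1)) else h (e 0).
have mm0 n : 0 < mm n by elim: n => [|n IH] //=; rewrite lt_min IH h0.
have mmh n : mm n <= h (e n) by case: n => [|n] //=; rewrite ge_min lexx orbT.
have mmd n : mm n.+1 <= mm n by rewrite /= ge_min lexx.
pose d n := mm n / n.+1%:R.
have d0 n : 0 < d n by rewrite divr_gt0 ?ltr0Sn.
have dS n : d n.+1 < d n.
  rewrite /d; apply: (@le_lt_trans _ _ (mm n / n.+2%:R)).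
    by rewrite ler_wpM2r ?invr_ge0 ?ler0n.
  by rewrite ltr_pM2l ?mm0// ltf_pV2 ?posrE ?ltr0Sn// ltr_nat.
have dlt n k : (n < k)%N -> d k < d n.
  elim: k => // k IH; rewrite ltnS leq_eqVlt => /orP[/eqP ->//|/IH].
  exact: lt_trans (dS k).
have dinj n k : d n = d k -> n = k.
  move=> E; case: (ltngtP n k) => // [/dlt|/dlt]; by rewrite E ltxx.
have dm n : d n <= mm n.
  by rewrite /d ler_pdivrMr ?ltr0Sn// ler_peMr ?(ltW (mm0 n)) ?ler1n.
pose del x := d (i x).
have del0 x : 0 < del x := d0 (i x).
have delh x : del x <= h x.
  by rewrite -{2}(ie x); apply: le_trans (dm _) (mmh _).
pose phi (nk : nat * nat) := (u (e nk.2) - u (e nk.1)) / (d nk.1 - d nk.2).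
have [t /andP[t0 t1] tphi] : exists2 t, 0 < t < 1 & ~ range phi t.
  case: (boolp.pselect (exists2 t, 0 < t < 1 & ~ range phi t)) => // H; exfalso.
  have sub : `]0, 1[%classic `<=` range phi.
    move=> t /=; rewrite in_itv /= => tI.
    by apply: boolp.contrapT => nt; apply: H; exists t.
  have cnt : countable (range phi).
    exact: card_le_trans (card_image_le _ _) (countableP _).
  have H2 : (lebesgue_measure (`]0%R, 1%R[%classic : set R) <=
             lebesgue_measure (range phi))%E.
    apply: le_measure => //; rewrite inE.
    - exact: measurable_itv.
    - exact: countable_measurable (fun r => measurable_set1 r) cnt.
  move: H2.
  rewrite (countable_lebesgue_measure0 cnt) lebesgue_measure_itv /= lte_fin ltr01.
  by rewrite oppr0 adde0 lee_fin ler10.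
pose g x := del x * t.
have gabs x : `|g x| < h x.
  rewrite /g normrM !gtr0_norm ?mulr_gt0//.
  by apply: lt_le_trans (delh x); rewrite gtr_pMr.
pose ue x := u x + g x.
exists ue; split.
- apply: (@Dp_add R X b c p b0 c0 p0) => //.
  rewrite /Dp; apply: lt_trans (ltry eps); apply: hf => x.
  by rewrite -ltr_norml (lt_le_trans (gabs x)).
- move=> x y xy E; apply: tphi; exists (i x, i y) => //=.
  rewrite /phi /= !ie.
  have dn : d (i x) - d (i y) != 0.
    by rewrite subr_eq0; apply/eqP => /dinj /iinj.
  have -> : u y - u x = (d (i x) - d (i y)) * t.
    move: E; rewrite /ue /g /del => E; lra.
  by rewrite [_ * t]mulrC mulfK.
- rewrite /sup_dist; apply: (@le_lt_trans _ _ (eps / 2)%:E); last first.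
    by rewrite lte_fin; lra.
  apply: ge_ereal_sup => _ [x _ <-]; rewrite lee_fin /ue opprD addrA subrr add0r.
  by rewrite normrN (le_trans (ltW (gabs x))).
- apply: hf => x; rewrite /ue opprD addrA subrr add0r.
  by rewrite -ltr_norml normrN (lt_le_trans (gabs x)).
Qed.
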